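(* Let $x\cdot y$ be a PA-structure on $(\mathfrak{g},\mathfrak{n})$, where $\mathfrak{g}$ is abelian and $\mathfrak{n}$ is $2$-step nilpotent. Then for all $p,q,x\in V$ with $\{x,p\}=\{x,q\}=0$ we have $x\cdot\{p,q\}=0$.
   Context: Let $K$ be a field of characteristic zero and $V$ a finite-dimensional vector space over $K$. Let $\mathfrak{g}=(V,[\,,])$ and $\mathfrak{n}=(V,\{\,,\})$ be two Lie algebra structures on $V$. A post-Lie algebra structure (PA-structure) on the pair $(\mathfrak{g},\mathfrak{n})$ is a $K$-bilinear product $x\cdot y$ on $V$ satisfying, for all $x,y,z\in V$: (i) $x\cdot y-y\cdot x=[x,y]-\{x,y\}$; (ii) $[x,y]\cdot z=x\cdot(y\cdot z)-y\cdot(x\cdot z)$; (iii) $x\cdot\{y,z\}=\{x\cdot y,z\}+\{y,x\cdot z\}$. A Lie algebra is called $2$-step nilpotent here if it is nilpotent of class at most $2$. *)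

(* Defs.v *)
From HB Require Import structures.
From mathcomp Require Import all_boot all_order all_algebra.
Set Implicit Arguments. Unset Strict Implicit. Unset Printing Implicit Defensive.
Import GRing.Theory.
Local Open Scope ring_scope.

Definition bilinear_op (K : fieldType) (V : lmodType K) (m : V -> V -> V) : Prop :=
  (forall a x y z, m (a *: x + y) z = a *: m x z + m y z) /\
  (forall a x y z, m x (a *: y + z) = a *: m x y + m x z).

Definition is_lie_bracket (K : fieldType) (V : lmodType K) (br : V -> V -> V) : Prop :=
  [/\ bilinear_op br,
      (forall x, br x x = 0) &
      (forall x y z, br x (br y z) + br y (br z x) + br z (br x y) = 0)].

Definition lie_abelian (K : fieldType) (V : lmodType K) (br : V -> V -> V) : Prop :=
  forall x y, br x y = 0.

Definition lie_two_step_nilpotent (K : fieldType) (V : lmodType K) (br : V -> V -> V) : Prop :=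
  forall x y z, br (br x y) z = 0.

(* Post-Lie algebra structure on (g = (V,lb), n = (V,ln)). *)
Definition is_PA_structure (K : fieldType) (V : lmodType K)
    (lb ln dot : V -> V -> V) : Prop :=
  [/\ bilinear_op dot,
      (forall x y, dot x y - dot y x = lb x y - ln x y),
      (forall x y z, dot (lb x y) z = dot x (dot y z) - dot y (dot x z)) &
      (forall x y z, dot x (ln y z) = ln (dot x y) z + ln y (dot x z))].

(* Main.v *)
Require Import Defs.
From HB Require Import structures.
From mathcomp Require Import all_boot all_order all_algebra.
Local Open Scope ring_scope.
Import GRing.Theory.

Theorem lemma4p10 (K : fieldType) (V : vectType K)
    (lb ln dot : V -> V -> V) :
  [pchar K] =i pred0 ->
  is_lie_bracket lb -> is_lie_bracket ln ->
  is_PA_structure lb ln dot ->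
  lie_abelian lb -> lie_two_step_nilpotent ln ->
  forall p q x : V, ln x p = 0 -> ln x q = 0 -> dot x (ln p q) = 0.
Proof.
move=> _ _ _ [[Hl Hr] Hi Hii _] Hab _ p q x Hp Hq.
have comm : forall a b c, dot a (dot b c) = dot b (dot a c).
  move=> a b c; apply/eqP; rewrite -subr_eq0 -Hii Hab.
  have h := Hl 1 0 0 c; rewrite scale1r addr0 -{1}[dot 0 c]addr0 scale1r in h.
  by rewrite -(addrI _ h).
have sw : forall a b, ln a b = 0 -> dot a b = dot b a.
  by move=> a b h; apply/eqP; rewrite -subr_eq0 Hi Hab h subr0.
have e : ln p q = (-1) *: dot p q + dot q p.
  by rewrite scaleN1r addrC -[RHS]opprK opprB Hi Hab sub0r opprK.
rewrite e Hr comm [dot x (dot q p)]comm (sw _ _ Hp) (sw _ _ Hq).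
by rewrite [dot q (dot p x)]comm scaleN1r addNr.
Qed.
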